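(* Let $\Lambda\subseteq\mathbb Z^D$ be a lattice inducing a lattice tiling of the shape $\mathcal S$, with $n=|\mathcal S|$. Let $\delta$ be a nonzero ternary vector such that $(\Lambda,\mathcal S,\delta)$ defines a folding, with folded-row $p_0,p_1,\dots$. Let $E\subseteq\mathbb Z_n$ be a $B_2$-sequence over $\mathbb Z_n$, and identify each $a\in E$ with its representative in $\{0,1,\dots,n-1\}$. Then: <ol> <li>The set of dots $\{p_a : a\in E\}\subseteq\mathcal S$ (the $B_2$-sequence placed along the folded-row) is a $D$-dimensional DDC.</li> <li>The set $X=\{a\delta+\lambda : a\in E,\ \lambda\in\Lambda\}$ is an infinite $\mathcal S$-DDC with $|E|$ dots, and $X\cap\mathcal S=\{p_a:a\in E\}$.</li> </ol>
   Context: Let $D\ge 1$. A shape is a finite nonempty set $\mathcal S\subset\mathbb Z^D$ containing the origin; the origin is its distinguished center point. A lattice is a set $\Lambda=\{\sum_{j=1}^D u_jv_j : u_1,\dots,u_D\in\mathbb Z\}$ for linearly independent $v_1,\dots,v_D\in\mathbb Z^D$. $\Lambda$ induces a lattice tiling of $\mathcal S$ if the translates $\mathcal S+\lambda$, $\lambda\in\Lambda$, are pairwise disjoint and cover $\mathbb Z^D$. The translate $\mathcal S+\lambda$ is called the copy of $\mathcal S$ with center $\lambda$. For $x\in\mathbb Z^D$, $c(x)$ denotes the unique $\lambda\in\Lambda$ with $x\in\mathcal S+\lambda$. A ternary vector (direction) is a nonzero $\delta\in\{-1,0,+1\}^D$. The folded-row of $(\Lambda,\mathcal S,\delta)$ is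 the sequence $p_0,p_1,p_2,\dots$ defined by $p_0=0$ and $p_{k+1}=(p_k+\delta)-c(p_k+\delta)$. The triple $(\Lambda,\mathcal S,\delta)$ defines a folding if every element of $\mathcal S$ occurs in its folded-row. A subset $E=\{a_1,\dots,a_m\}$ of an abelian group $A$ (with distinct elements) is a $B_2$-sequence over $A$ if all sums $a_{i_1}+a_{i_2}$ with $1\le i_1\le i_2\le m$ are distinct. A finite set $Y\subseteq\mathbb Z^D$ (''dots'') is a distinct difference configuration (DDC) if the vectors $y-y'$, over ordered pairs $(y,y')$ of distinct points of $Y$, are pairwise distinct. A set $X\subseteq\mathbb Z^D$ is an infinite $\mathcal S$-DDC with $m$ dots if for every $t\in\mathbb Z^D$ the set $X\cap(\mathcal S+t)$ has exactly $m$ elements and is a DDC. *)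

(* Defs.v *)
From HB Require Import structures.
From mathcomp Require Import all_boot all_order all_algebra.
From Stdlib Require Import ClassicalEpsilon.
Set Implicit Arguments. Unset Strict Implicit. Unset Printing Implicit Defensive.
Import Order.TTheory GRing.Theory Num.Theory.
Local Open Scope ring_scope.

Definition vec (D : nat) := 'rV[int]_D.

(* The lattice with basis v_1..v_D given as the rows of B:
   { sum_j u_j v_j : u in Z^D } = { u *m B }. *)
Definition in_lattice (D : nat) (B : 'M[int]_D) (x : vec D) : Prop :=
  exists u : 'rV[int]_D, x = u *m B.

Definition lin_indep (D : nat) (B : 'M[int]_D) : Prop :=
  forall u : 'rV[int]_D, u *m B = 0 -> u = 0.

Definition is_shape (D : nat) (S : seq (vec D)) : Prop :=
  uniq S /\ (0 : vec D) \in S.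

Definition lattice_tiling (D : nat) (B : 'M[int]_D) (S : seq (vec D)) : Prop :=
  (forall x : vec D, exists l, in_lattice B l /\ x \in [seq s + l | s <- S]) /\
  (forall l1 l2 : vec D, in_lattice B l1 -> in_lattice B l2 -> l1 != l2 ->
     forall x, x \in [seq s + l1 | s <- S] -> x \notin [seq s + l2 | s <- S]).

(* c(x): the (unique, under tiling) lattice point lambda with x in S + lambda. *)
Definition center (D : nat) (B : 'M[int]_D) (S : seq (vec D)) (x : vec D) : vec D :=
  epsilon (inhabits (0 : vec D))
    (fun l => in_lattice B l /\ x \in [seq s + l | s <- S]).

Definition ternary (D : nat) (d : vec D) : Prop :=
  d != 0 /\ forall i : 'I_D, d 0 i \in [:: -1; 0; 1].

Fixpoint folded_row (D : nat) (B : 'M[int]_D) (S : seq (vec D)) (d : vec D)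
    (k : nat) : vec D :=
  match k with
  | 0 => 0
  | k'.+1 => let y := folded_row B S d k' + d in y - center B S y
  end.

Definition folding (D : nat) (B : 'M[int]_D) (S : seq (vec D)) (d : vec D) : Prop :=
  forall s, s \in S -> exists k, folded_row B S d k = s.

Definition B2_seq (n : nat) (E : seq nat) : Prop :=
  uniq E /\ all (fun a => (a < n)%N) E /\
  forall i1 i2 j1 j2 : nat,
    (i1 <= i2 < size E)%N -> (j1 <= j2 < size E)%N ->
    (nth 0 E i1 + nth 0 E i2 == nth 0 E j1 + nth 0 E j2 %[mod n])%N ->
    i1 = j1 /\ i2 = j2.

Definition is_DDC (D : nat) (Y : seq (vec D)) : Prop :=
  forall y1 y2 y3 y4, y1 \in Y -> y2 \in Y -> y3 \in Y -> y4 \in Y ->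
    y1 != y2 -> y3 != y4 -> y1 - y2 = y3 - y4 -> y1 = y3 /\ y2 = y4.

Definition infinite_DDC (D : nat) (S : seq (vec D)) (X : vec D -> Prop) (m : nat)
  : Prop :=
  forall t : vec D, exists Y : seq (vec D),
    uniq Y /\ (forall y, y \in Y <-> (X y /\ y \in [seq s + t | s <- S])) /\
    size Y = m /\ is_DDC Y.

(* Main.v *)
Require Import Defs.
From HB Require Import structures.
From mathcomp Require Import all_boot all_order all_algebra.
From Stdlib Require Import ClassicalEpsilon Classical.
Set Implicit Arguments. Unset Strict Implicit. Unset Printing Implicit Defensive.
Import Order.TTheory GRing.Theory Num.Theory.
Local Open Scope ring_scope.

Lemma lat0 D (B : 'M[int]_D) : in_lattice B 0.
Proof. by exists 0; rewrite mul0mx. Qed.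

Lemma latD D (B : 'M[int]_D) x y :
  in_lattice B x -> in_lattice B y -> in_lattice B (x + y).
Proof. by move=> [u ->] [v ->]; exists (u + v); rewrite mulmxDl. Qed.

Lemma latN D (B : 'M[int]_D) x : in_lattice B x -> in_lattice B (- x).
Proof. by move=> [u ->]; exists (- u); rewrite mulNmx. Qed.

Lemma latZ D (B : 'M[int]_D) x z : in_lattice B x -> in_lattice B (x *~ z).
Proof. by move=> [u ->]; exists (u *~ z); rewrite -!scaler_int scalemxAl. Qed.

Definition cong D (B : 'M[int]_D) (x y : vec D) := in_lattice B (x - y).

Lemma cong_refl D (B : 'M[int]_D) x : cong B x x.
Proof. by rewrite /cong subrr; apply: lat0. Qed.

Lemma cong_sym D (B : 'M[int]_D) x y : cong B x y -> cong B y x.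
Proof. by move=> h; rewrite /cong -opprB; apply: latN. Qed.

Lemma cong_trans D (B : 'M[int]_D) x y z : cong B x y -> cong B y z -> cong B x z.
Proof.
move=> h1 h2; have := latD h1 h2.
by rewrite /cong addrA subrK.
Qed.

Lemma cong_add D (B : 'M[int]_D) x y x' y' :
  cong B x x' -> cong B y y' -> cong B (x + y) (x' + y').
Proof.
move=> h1 h2; have := latD h1 h2.
by rewrite /cong opprD addrACA.
Qed.

Lemma cong_opp D (B : 'M[int]_D) x y : cong B x y -> cong B (- x) (- y).
Proof. by move=> h; rewrite /cong -opprD; apply: latN. Qed.

Lemma cong_sub D (B : 'M[int]_D) x y x' y' :
  cong B x x' -> cong B y y' -> cong B (x - y) (x' - y').
Proof. by move=> h1 h2; apply: cong_add => //; apply: cong_opp. Qed.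

Lemma center_spec D (B : 'M[int]_D) S x : lattice_tiling B S ->
  in_lattice B (center B S x) /\ x \in [seq s + center B S x | s <- S].
Proof. by move=> [cov _]; rewrite /center; apply: (@epsilon_spec _ _ (fun l => in_lattice B l /\ x \in [seq s + l | s <- S])); apply: cov. Qed.

Lemma tile_uniq D (B : 'M[int]_D) S s1 s2 : lattice_tiling B S ->
  s1 \in S -> s2 \in S -> cong B s1 s2 -> s1 = s2.
Proof.
move=> [_ disj] h1 h2 hl; case: (eqVneq s1 s2) => // ne.
have hne : (0 : vec D) != s1 - s2 by rewrite eq_sym subr_eq0.
have hA : s1 \in [seq s + 0 | s <- S] by apply/mapP; exists s1; rewrite ?addr0.
have hB : s1 \in [seq s + (s1 - s2) | s <- S].
  by apply/mapP; exists s2 => //; rewrite addrC subrK.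
by have := disj 0 (s1 - s2) (lat0 B) hl hne s1 hA; rewrite hB.
Qed.

Lemma fr_spec D (B : 'M[int]_D) S d k : lattice_tiling B S -> is_shape S ->
  folded_row B S d k \in S /\ cong B (folded_row B S d k) (d *+ k).
Proof.
move=> hT [_ h0]; elim: k => [|k [IHs IHl]] /=.
  by rewrite mulr0n; split => //; apply: cong_refl.
set y := _ + d.
have [hc /mapP [s hs hy]] := center_spec y hT.
split; first by rewrite {1}hy addrK.
rewrite mulrS addrC.
have -> : d *+ k + d = d *+ k + d - 0 by rewrite subr0.
apply: cong_sub; first by apply: cong_add => //; apply: cong_refl.
by rewrite /cong subr0.
Qed.

Lemma fr_shift D (B : 'M[int]_D) S d i K : lattice_tiling B S -> is_shape S ->
  in_lattice B (d *+ K) -> folded_row B S d (i + K)%N = folded_row B S d i.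
Proof.
move=> hT hS hK.
have [h1 c1] := fr_spec d (i + K)%N hT hS.
have [h2 c2] := fr_spec d i hT hS.
apply: tile_uniq hT h1 h2 _.
apply: cong_trans c1 _. rewrite mulrnDr -[folded_row B S d i]addr0.
apply: cong_add; first exact: cong_sym.
by rewrite /cong subr0.
Qed.

Lemma fr_diff D (B : 'M[int]_D) S d i j : lattice_tiling B S -> is_shape S ->
  (i <= j)%N -> folded_row B S d i = folded_row B S d j -> in_lattice B (d *+ (j - i)).
Proof.
move=> hT hS hij he.
have [_ c1] := fr_spec d j hT hS.
have [_ c2] := fr_spec d i hT hS.
have := cong_sub c1 c2; rewrite he subrr.
rewrite -{1}(subnK hij) mulrnDr addrK => /cong_sym.
by rewrite /cong subr0.
Qed.

Lemma per_exists D (B : 'M[int]_D) S d : lattice_tiling B S -> is_shape S ->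
  exists K, (0 < K)%N /\ in_lattice B (d *+ K).
Proof.
move=> hT hS; case: (classic (exists K, (0 < K)%N /\ in_lattice B (d *+ K))) => // H.
have hu : uniq [seq folded_row B S d i | i <- iota 0 (size S).+1].
  rewrite map_inj_in_uniq ?iota_uniq // => i j _ _ hij.
  case: (ltngtP i j) => // hlt; exfalso; apply: H.
    by exists (j - i)%N; split; [rewrite subn_gt0 | apply: fr_diff (ltnW hlt) hij].
  by exists (i - j)%N; split; [rewrite subn_gt0 | apply: fr_diff (ltnW hlt) (esym hij)].
have hsub : {subset [seq folded_row B S d i | i <- iota 0 (size S).+1] <= S}.
  by move=> y /mapP [i _ ->]; have [] := fr_spec d i hT hS.
by have := uniq_leq_size hu hsub; rewrite size_map size_iota ltnn.
Qed.

Definition pb (P : nat -> Prop) : pred nat :=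
  fun k => if excluded_middle_informative (P k) then true else false.

Lemma pbP P k : reflect (P k) (pb P k).
Proof. by rewrite /pb; case: excluded_middle_informative => h; constructor. Qed.

Lemma latMn D (B : 'M[int]_D) x q : in_lattice B x -> in_lattice B (x *+ q).
Proof. by move=> h; apply: (latZ (Posz q) h). Qed.

Lemma key D (B : 'M[int]_D) S d : lattice_tiling B S -> is_shape S -> folding B S d ->
  forall z : int, in_lattice B (d *~ z) -> ((size S)%:Z %| z)%Z.
Proof.
move=> hT hS hF.
have [K [K0 hK]] := per_exists d hT hS.
pose P := fun k => (0 < k)%N /\ in_lattice B (d *+ k).
have ex : exists k, pb P k by exists K; apply/pbP.
case: (ex_minnP ex) => m /pbP [m0 hm] hmin.
have hmin' : forall k, (0 < k)%N -> in_lattice B (d *+ k) -> (m <= k)%N.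
  by move=> k k0 hk; apply: hmin; apply/pbP.
have mz : (m%:Z != 0) by rewrite eqz_nat -lt0n.
have div : forall z : int, in_lattice B (d *~ z) -> (m%:Z %| z)%Z.
  move=> z hz; apply/dvdz_mod0P.
  have r0 := modz_ge0 z mz.
  have rlt := ltz_mod z mz.
  have hr := gez0_abs r0.
  set r := (z %% m)%Z in r0 rlt hr *.
  have hl : in_lattice B (d *~ r).
    have -> : d *~ r = d *~ z - (d *~ m%:Z) *~ (z %/ m)%Z.
      by rewrite mulrzA_C -mulrzBr {1}(divz_eq z m) addrAC subrr add0r.
    exact: latD hz (latN (latZ _ hm)).
  rewrite -hr in hl rlt *; case: (posnP `|r|%N) => [-> //| hpos].
  have := hmin' _ hpos hl.
  have rlt' : (`|r| < m)%N by move: rlt; rewrite -[X in _ < X]/(Posz m) ltz_nat.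
  by move=> hle; move: rlt'; rewrite ltnNge hle.
have m_le : (m <= size S)%N.
  have hu : uniq [seq folded_row B S d i | i <- iota 0 m].
    rewrite map_inj_in_uniq ?iota_uniq // => i j; rewrite !mem_iota /= => hi hj hij.
    case: (ltngtP i j) => // hlt; exfalso.
      have := hmin' (j - i)%N; rewrite subn_gt0 hlt => /(_ isT (fr_diff hT hS (ltnW hlt) hij)).
      by apply/negP; rewrite -ltnNge; apply: leq_ltn_trans (leq_subr _ _) hj.
    have := hmin' (i - j)%N; rewrite subn_gt0 hlt => /(_ isT (fr_diff hT hS (ltnW hlt) (esym hij))).
    by apply/negP; rewrite -ltnNge; apply: leq_ltn_trans (leq_subr _ _) hi.
  have hsub : {subset [seq folded_row B S d i | i <- iota 0 m] <= S}.
    by move=> y /mapP [i _ ->]; have [] := fr_spec d i hT hS.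
  by have := uniq_leq_size hu hsub; rewrite size_map size_iota.
have S_le : (size S <= m)%N.
  have hsub : {subset S <= [seq folded_row B S d i | i <- iota 0 m]}.
    move=> s /hF [k <-]; apply/mapP; exists (k %% m)%N.
      by rewrite mem_iota /= ltn_pmod.
    rewrite {1}(divn_eq k m) addnC fr_shift //.
    by rewrite mulnC mulrnA; apply: latMn.
  by have := uniq_leq_size hS.1 hsub; rewrite size_map size_iota.
have eS : m = size S by apply/eqP; rewrite eqn_leq m_le S_le.
by rewrite -eS.
Qed.

Lemma B2_pair n E a b c e : B2_seq n E -> a \in E -> b \in E -> c \in E -> e \in E ->
  (a + e == c + b %[mod n])%N -> (a = c /\ e = b) \/ (a = b /\ e = c).
Proof.
move=> [_ [_ hB]] ha hb hc he hcong.
have Ea := nth_index 0%N ha; have Eb := nth_index 0%N hb.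
have Ec := nth_index 0%N hc; have Ee := nth_index 0%N he.
have la := index_mem a E; have lb := index_mem b E.
have lc := index_mem c E; have le := index_mem e E.
rewrite -la in ha; rewrite -lb in hb; rewrite -lc in hc; rewrite -le in he.
set ia := index a E in Ea ha; set ib := index b E in Eb hb.
set ic := index c E in Ec hc; set ie := index e E in Ee he.
case: (leqP ia ie) => h1; case: (leqP ic ib) => h2.
- have [x y] : ia = ic /\ ie = ib.
    by apply: hB; [rewrite h1 he | rewrite h2 hb | rewrite Ea Ee Ec Eb].
  by left; rewrite -Ea -Ec -Ee -Eb x y.
- have [x y] : ia = ib /\ ie = ic.
    by apply: hB; [rewrite h1 he | rewrite (ltnW h2) hc | rewrite Ea Ee Ec Eb [(b + c)%N]addnC].
  by right; rewrite -Ea -Ec -Ee -Eb x y.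
- have [x y] : ie = ic /\ ia = ib.
    by apply: hB; [rewrite (ltnW h1) ha | rewrite h2 hb | rewrite Ea Ee Ec Eb [(e + a)%N]addnC].
  by right; rewrite -Ea -Ec -Ee -Eb x y.
- have [x y] : ie = ib /\ ia = ic.
    by apply: hB; [rewrite (ltnW h1) ha | rewrite (ltnW h2) hc | rewrite Ea Ee Ec Eb [(e + a)%N]addnC [(b + c)%N]addnC].
  by left; rewrite -Ea -Ec -Ee -Eb x y.
Qed.

Lemma dvdz_cong (n x y : nat) : (n%:Z %| x%:Z - y%:Z)%Z -> (x == y %[mod n])%N.
Proof.
rewrite -eqz_mod_dvd => /eqP h; apply/eqP.
by move: h; rewrite !modz_nat => -[].
Qed.

Lemma lat_int_diff D (B : 'M[int]_D) d (a b : nat) :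
  cong B (d *+ a) (d *+ b) -> in_lattice B (d *~ (a%:Z - b%:Z)).
Proof. by rewrite mulrzBr. Qed.

Lemma ddc_gen D (B : 'M[int]_D) S d E f : lattice_tiling B S -> is_shape S ->
  folding B S d -> B2_seq (size S) E ->
  (forall a, a \in E -> cong B (f a) (d *+ a)) -> is_DDC [seq f a | a <- E].
Proof.
move=> hT hS hF hB hf y1 y2 y3 y4 /mapP[a ha ->] /mapP[b hb ->] /mapP[c hc ->]
  /mapP[e he ->] n12 n34 heq.
have hl : in_lattice B (d *~ ((a%:Z - b%:Z) - (c%:Z - e%:Z))).
  rewrite !mulrzBr.
  have := cong_sub (cong_sub (hf a ha) (hf b hb)) (cong_sub (hf c hc) (hf e he)).
  rewrite heq subrr => /cong_sym; rewrite /cong subr0; exact.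
have := key hT hS hF hl.
have -> : (a%:Z - b%:Z) - (c%:Z - e%:Z) = (a + e)%N%:Z - (c + b)%N%:Z.
  by rewrite opprB addrACA !PoszD opprD [(- c%:Z) + _]addrC.
move/dvdz_cong => /(B2_pair hB ha hb hc he) [[-> ->] | [ab _]] //.
by rewrite ab eqxx in n12.
Qed.

Lemma uniq_gen D (B : 'M[int]_D) S d E f : lattice_tiling B S -> is_shape S ->
  folding B S d -> B2_seq (size S) E ->
  (forall a, a \in E -> cong B (f a) (d *+ a)) -> uniq [seq f a | a <- E].
Proof.
move=> hT hS hF hB hf; have [hu [hall _]] := hB.
rewrite map_inj_in_uniq // => a b ha hb hab.
have hc : cong B (d *+ a) (d *+ b).
  by apply: cong_trans (cong_sym (hf a ha)) _; rewrite hab; apply: hf.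
have /dvdz_cong := key hT hS hF (lat_int_diff hc).
by rewrite !modn_small ?(allP hall) // => /eqP.
Qed.

Lemma char_gen D (B : 'M[int]_D) S d E (t : vec D) f : lattice_tiling B S ->
  (forall a, a \in E -> f a - t \in S /\ cong B (f a) (d *+ a)) ->
  forall y, ((exists2 a, a \in E & exists l, in_lattice B l /\ y = d *+ a + l)
      /\ y \in [seq s + t | s <- S]) <-> y \in [seq f a | a <- E].
Proof.
move=> hT hf y; split.
- move=> [[a ha [l [hl ->]]] /mapP [s hs hy]].
  apply/mapP; exists a => //.
  have [hft hfc] := hf a ha.
  suff : d *+ a + l - t = f a - t by move/addIr.
  apply: tile_uniq hT _ hft _; first by rewrite hy addrK.
  apply: cong_sub; last exact: cong_refl.
  apply: cong_trans _ (cong_sym hfc).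
  by rewrite /cong addrAC subrr add0r.
- move=> /mapP [a ha ->]; have [hft hfc] := hf a ha; split.
    by exists a => //; exists (f a - d *+ a); split => //; rewrite addrC subrK.
  by apply/mapP; exists (f a - t) => //; rewrite subrK.
Qed.

Theorem mainTheorem9 (D : nat) (B : 'M[int]_D) (S : seq (vec D)) (d : vec D)
    (E : seq nat) :
  (0 < D)%N ->
  lin_indep B ->
  is_shape S ->
  lattice_tiling B S ->
  ternary d ->
  folding B S d ->
  B2_seq (size S) E ->
  let p := folded_row B S d in
  (all (fun y => y \in S) [seq p a | a <- E] /\ is_DDC [seq p a | a <- E]) /\
  (infinite_DDC S
     (fun y => exists2 a, a \in E & exists l, in_lattice B l /\ y = d *+ a + l)
     (size E) /\
   (forall y, ((exists2 a, a \in E & exists l, in_lattice B l /\ y = d *+ a + l)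
               /\ y \in S) <-> y \in [seq p a | a <- E])).
Proof.
move=> _ _ hS hT _ hF hB p.
have hp : forall a, p a \in S /\ cong B (p a) (d *+ a) := fun a => fr_spec d a hT hS.
split; first split.
- by apply/allP => y /mapP [a _ ->]; exact: (hp a).1.
- by apply: ddc_gen hT hS hF hB _ => a _; exact: (hp a).2.
split.
- move=> t.
  pose q a := (d *+ a - t) - center B S (d *+ a - t) + t.
  have hq : forall a, a \in E -> q a - t \in S /\ cong B (q a) (d *+ a).
    move=> a _; have [hc /mapP [s hs hs']] := center_spec (d *+ a - t) hT.
    split; first by rewrite /q addrK {1}hs' addrK.
    rewrite /q addrAC subrK /cong addrAC subrr add0r.
    exact: latN.
  have hq2 : forall a, a \in E -> cong B (q a) (d *+ a) by move=> a /hq [].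
  exists [seq q a | a <- E]; split; first exact: uniq_gen hT hS hF hB hq2.
  split; first by move=> y; rewrite (char_gen hT hq).
  by split; [rewrite size_map | apply: ddc_gen hT hS hF hB hq2].
- move=> y.
  have hp0 : forall a, a \in E -> p a - 0 \in S /\ cong B (p a) (d *+ a).
    by move=> a _; rewrite subr0; exact: hp.
  have := char_gen hT hp0 y.
  have -> : [seq s + 0 | s <- S] = S.
    by rewrite (eq_map (g := id)) ?map_id // => s; rewrite addr0.
  by [].
Qed.
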